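(* Let $\mathbf{f}=(\mathbf{f}_0,\dots,\mathbf{f}_{k-1})$ be uniform in $\mathcal{F}(n,k)$ (assumed nonempty), let $\mathbf{u}$ be a node chosen uniformly among all $n$ nodes of $\mathbf{f}$, let $\mathbf{i}$ be the index of the tree containing $\mathbf{u}$, and let $R_{\mathbf{u}}(\mathbf{f})=((\mathbf{f}_{\mathbf{i}},\mathbf{u}),\mathbf{f}_{\mathbf{i}+1\bmod k},\dots,\mathbf{f}_{\mathbf{i}+k-1\bmod k})$. Then $R_{\mathbf{u}}(\mathbf{f})$ is uniformly distributed on $\mathcal{F}^\bullet(n,k)$. Consequently, the decreasingly sorted tree-size vector of a uniform element of $\mathcal{F}(n,k)$ has the same distribution as that of a uniform element of $\mathcal{F}^\bullet(n,k)$.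
   Context: $\mathcal{F}(n,k)$ is the set of sequences $(f_0,\dots,f_{k-1})$ of $k$ rooted plane complete binary trees (every node has $0$ or $2$ ordered children) with $n$ nodes in total. $\mathcal{F}^\bullet(n,k)$ is the set of $((f_0,v),f_1,\dots,f_{k-1})$ with $(f_0,\dots,f_{k-1})\in\mathcal{F}(n,k)$ and $v$ a node of $f_0$. The tree-size vector of a forest is $(|f_0|,\dots,|f_{k-1}|)$, $|f_i|$ being the number of nodes of $f_i$. *)

(* Defs.v *)
From HB Require Import structures.
From mathcomp Require Import all_boot.
Set Implicit Arguments. Unset Strict Implicit. Unset Printing Implicit Defensive.

Inductive tree : Type := Leaf | Node of tree & tree.

Definition tree_eq_dec : forall x y : tree, {x = y} + {x <> y}.
Proof. decide equality. Defined.
HB.instance Definition _ := hasDecEq.Build tree (compareP tree_eq_dec).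

Fixpoint tsize (t : tree) : nat :=
  match t with Leaf => 1 | Node l r => (tsize l + tsize r).+1 end.

(* Nodes of a tree are addressed by their path from the root
   (false = left child, true = right child). *)
Fixpoint is_node (t : tree) (p : seq bool) : bool :=
  match p, t with
  | [::], _ => true
  | b :: p', Node l r => is_node (if b then r else l) p'
  | _ :: _, Leaf => false
  end.

Definition inF (n k : nat) (f : seq tree) : bool :=
  (size f == k) && (sumn (map tsize f) == n).

(* F^bullet(n,k): ((f_0, v), [f_1; ...; f_{k-1}]) with v a node of f_0 *)
Definition pforest := ((tree * seq bool) * seq tree)%type.
Definition pf_trees (g : pforest) : seq tree := g.1.1 :: g.2.
Definition inFp (n k : nat) (g : pforest) : bool :=
  inF n k (pf_trees g) && is_node g.1.1 g.1.2.

(* A forest together with a node u of it: u = (i, p), node p of tree f_i. *)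
Definition fnode := (seq tree * (nat * seq bool))%type.
Definition inU (n k : nat) (x : fnode) : bool :=
  [&& inF n k x.1, x.2.1 < k & is_node (nth Leaf x.1 x.2.1) x.2.2].

Definition Rot (x : fnode) : pforest :=
  let h := rot x.2.1 x.1 in ((head Leaf h, x.2.2), behead h).

Definition sorted_sizes (f : seq tree) : seq nat := sort geq (map tsize f).

Definition has_card (T : eqType) (P : T -> bool) (c : nat) : Prop :=
  exists s : seq T, [/\ uniq s, (forall x, (x \in s) = P x) & size s = c].

(* Main.v *)
Require Import Defs.
From mathcomp Require Import all_boot.
From mathcomp Require Import zify.
Set Implicit Arguments. Unset Strict Implicit.
Local Notation tsz := Defs.tsize.

Fixpoint tl (d : nat) : seq tree :=
  match d with 0 => [:: Leaf] | d'.+1 => Leaf :: [seq Node l r | l <- tl d', r <- tl d'] end.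

Lemma tl_complete (t : tree) d : tsz t <= d -> t \in tl d.
Proof.
elim: t d => [|l IHl r IHr] [|d] //=; rewrite ?inE ?eqxx //.
move=> H; apply/orP; right.
apply: (allpairs_f (fun l r => Node l r)); [apply: IHl | apply: IHr]; lia.
Qed.

Fixpoint fs (s : seq tree) (k : nat) : seq (seq tree) :=
  match k with 0 => [:: [::]] | k'.+1 => [seq t :: f | t <- s, f <- fs s k'] end.

Lemma fs_complete (s : seq tree) (f : seq tree) : all (mem s) f -> f \in fs s (size f).
Proof.
elim: f => [|t f IH] /=; first by rewrite inE.
move/andP=> [ht hf]; exact: (allpairs_f (fun t f => t :: f) ht (IH hf)).
Qed.

Lemma tsz_le_sumn (f : seq tree) (t : tree) : t \in f -> tsz t <= sumn (map tsz f).
Proof.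
elim: f => [|x f IH] //=; rewrite inE => /orP [/eqP->|/IH]; lia.
Qed.

Definition SF n k := filter (inF n k) (undup (fs (tl n) k)).

Lemma SF_uniq n k : uniq (SF n k).
Proof. by rewrite filter_uniq // undup_uniq. Qed.

Lemma SF_mem n k (f : seq tree) : (f \in SF n k) = inF n k f.
Proof.
rewrite mem_filter mem_undup; case H: (inF n k f) => //=.
move/andP: H => [/eqP <- /eqP Hn]; apply: fs_complete.
apply/allP => t ht; apply: tl_complete; rewrite -Hn; exact: tsz_le_sumn.
Qed.

Fixpoint pths (t : tree) : seq (seq bool) :=
  match t with Leaf => [:: [::]]
  | Node l r => [::] :: map (cons false) (pths l) ++ map (cons true) (pths r) end.

Lemma pths_size (t : tree) : size (pths t) = tsz t.
Proof. by elim: t => //= l IHl r IHr; rewrite size_cat !size_map IHl IHr. Qed.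

Lemma pths_mem (t : tree) (p : seq bool) : (p \in pths t) = is_node t p.
Proof.
elim: t p => [|l IHl r IHr] [|b p] //=; rewrite ?inE //.
rewrite mem_cat; case: b => /=.
- have -> : (true :: p \in map (cons false) (pths l)) = false.
    by apply/mapP => -[q _].
  by rewrite (mem_map (fun x y (e : true :: x = true :: y) => congr1 behead e)) IHr.
- have -> : (false :: p \in map (cons true) (pths r)) = false.
    by apply/mapP => -[q _].
  by rewrite (mem_map (fun x y (e : false :: x = false :: y) => congr1 behead e)) IHl orbF.
Qed.

Lemma pths_uniq (t : tree) : uniq (pths t).
Proof.
elim: t => //= l IHl r IHr.
rewrite mem_cat cat_uniq !map_inj_uniq //; last by move=> x y [].
  2: by move=> x y [].
rewrite IHl IHr /= andbT.
apply/andP; split.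
  by apply/norP; split; apply/negP => /mapP [q _].
apply/hasP => -[x /mapP [q _ ->] /mapP [q' _]] //.
Qed.

Lemma inF_rot n k j (f : seq tree) : inF n k (rot j f) = inF n k f.
Proof. by rewrite /inF size_rot map_rot sumn_rot. Qed.

Lemma sum_nth_tsz (f : seq tree) :
  \sum_(j < size f) tsz (nth Leaf f j) = sumn (map tsz f).
Proof.
elim: f => [|x f IH]; first by rewrite big_ord0.
by rewrite /= big_ord_recl /= IH.
Qed.

Lemma head_rot j (f : seq tree) : j < size f -> head Leaf (rot j f) = nth Leaf f j.
Proof.
move=> Hj; rewrite /rot -nth0 nth_cat size_drop subn_gt0 Hj nth_drop addn0 //.
Qed.

Section Q.
Variables (n k : nat) (Q : pred (seq tree)).
Hypothesis Qrot : forall j f, Q (rot j f) = Q f.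

Definition SFQ := filter Q (SF n k).

Lemma SFQ_uniq : uniq SFQ.
Proof. by rewrite filter_uniq // SF_uniq. Qed.

Lemma SFQ_mem f : (f \in SFQ) = inF n k f && Q f.
Proof. by rewrite mem_filter SF_mem andbC. Qed.

Lemma sum_rot j (F : seq tree -> nat) :
  \sum_(f <- SFQ) F (rot j f) = \sum_(f <- SFQ) F f.
Proof.
rewrite -(big_map (rot j) xpredT F); apply: perm_big.
apply: uniq_perm; first by rewrite map_inj_uniq ?SFQ_uniq //; apply: rot_inj.
  exact: SFQ_uniq.
move=> f; apply/mapP; case: ifP.
- rewrite SFQ_mem => Hf; exists (rotr j f); last by rewrite rotrK.
  by rewrite SFQ_mem /rotr inF_rot Qrot.
- move=> Hf [g Hg Ef]; move: Hf; rewrite Ef SFQ_mem inF_rot Qrot -SFQ_mem Hg //.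
Qed.

Lemma key_sum : k * \sum_(f <- SFQ) tsz (head Leaf f) = n * size SFQ.
Proof.
have H1 : forall j : 'I_k, \sum_(f <- SFQ) tsz (head Leaf f) = \sum_(f <- SFQ) tsz (nth Leaf f j).
  move=> j; rewrite -(sum_rot j (fun f => tsz (head Leaf f))).
  rewrite big_seq_cond [RHS]big_seq_cond; apply: eq_bigr => f /andP [Hf _].
  move: Hf; rewrite SFQ_mem => /andP [/andP [/eqP Hs _] _].
  by rewrite head_rot // Hs.
rewrite -[k]card_ord -sum_nat_const (eq_bigr _ (fun j _ => H1 j)).
rewrite exchange_big /=.
rewrite big_seq_cond (eq_bigr (fun _ => n)); last first.
  move=> f /andP [Hf _].
  move: Hf; rewrite SFQ_mem => /andP [/andP [/eqP Hs /eqP Hn] _].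
  by rewrite -Hn -sum_nth_tsz Hs.
rewrite -big_seq_cond.
elim: SFQ => [|x s IH]; first by rewrite big_nil muln0.
by rewrite big_cons IH mulnS.
Qed.

Definition mk (f : seq tree) : seq pforest :=
  map (fun p => ((head Leaf f, p), behead f)) (pths (head Leaf f)).

Definition SPQ := flatten (map mk SFQ).

Lemma SPQ_size : size SPQ = \sum_(f <- SFQ) tsz (head Leaf f).
Proof.
rewrite /SPQ; elim: SFQ => [|x s IH]; first by rewrite big_nil.
by rewrite big_cons /= size_cat IH size_map pths_size.
Qed.


Lemma mk_flat_uniq (s : seq (seq tree)) :
  uniq s -> all (fun f => 0 < size f) s -> uniq (flatten (map mk s)).
Proof.
elim: s => [|x s IH] //= /andP [xs us] /andP [px ps].
rewrite cat_uniq IH // andbT map_inj_uniq ?pths_uniq //; last by move=> p q [].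
apply/hasP => -[g /flattenP [m /mapP [y ys ->] gy] gx].
move: gx gy => /mapP [p _ ->] /mapP [q _ [e1 _ e2]].
have py : 0 < size y by move/allP: ps => /(_ y ys).
suff Exy : x = y by move: xs; rewrite Exy ys.
clear xs; by move: e1 e2 px py; case: x => [|a x]; case: (y) => [|b y'] //= -> ->.
Qed.

Hypothesis kpos : 0 < k.

Lemma SPQ_uniq : uniq SPQ.
Proof.
apply: mk_flat_uniq; first exact: SFQ_uniq.
apply/allP => f; rewrite SFQ_mem => /andP [/andP [/eqP -> _] _] //.
Qed.

Lemma SPQ_mem g : (g \in SPQ) = inFp n k g && Q (pf_trees g).
Proof.
case: g => [[t p] r]; rewrite /inFp /pf_trees /=.
apply/flattenP; case: ifP.
- move=> /andP [/andP [Hf Hn] HQ]; exists (mk (t :: r)).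
    by apply/mapP; exists (t :: r); rewrite // SFQ_mem Hf HQ.
  by apply/mapP; exists p; rewrite // pths_mem.
- move=> H [m /mapP [f Hf ->] /mapP [q Hq [e1 e2 e3]]].
  move: Hf; rewrite SFQ_mem => /andP [Hf HQ].
  have Hs : 0 < size f by move: Hf => /andP [/eqP -> _].
  have Ef : f = t :: r by move: e1 e3 Hs; case: (f) => [|a f'] //= -> ->.
  move: H; rewrite -Ef Hf HQ /= andbT e2 -pths_mem e1 Hq //.
Qed.
End Q.

Definition fib (k : nat) (g : pforest) : seq fnode :=
  [seq (rotr i (pf_trees g), (i, g.1.2)) | i <- iota 0 k].

Lemma fib_uniq k g : uniq (fib k g).
Proof.
rewrite /fib map_inj_uniq ?iota_uniq //.
by move=> i j [_ ->].
Qed.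

Lemma fib_mem n k g x : inFp n k g ->
  (x \in fib k g) = inU n k x && (Rot x == g).
Proof.
case: g => [[t p] r]; rewrite /inFp /pf_trees /= => /andP [HF Hp].
have Hs : size (t :: r) = k by move: HF => /andP [/eqP ->].
case: x => [f [i q]]; rewrite /inU /Rot /=.
apply/mapP; case: ifP.
- move=> /andP [/and3P [Hf Hi Hq] /eqP E]; exists i; first by rewrite mem_iota.
  have Sf : size f = k by move: Hf => /andP [/eqP ->].
  have Er : rot i f = t :: r.
    case: E; move: (size_rot i f); case: (rot i f) => [|a l] /=.
      by move=> Hz; move: Hi; rewrite -Sf -Hz.
    by move=> _ -> _ ->.
  by case: E => _ Eq _; rewrite /pf_trees /= -Er rotK Eq.
- move=> H [j]; rewrite mem_iota add0n => Hj [Ef Ei Eq]; move: H.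
  rewrite Ef Ei Eq /pf_trees /= rotrK /= eqxx andbT.
  have Hj' : j < k by case/andP: Hj.
  rewrite {1}/rotr inF_rot HF Hj' -head_rot ?rotrK //=; first by rewrite Hp.
  by rewrite size_rotr Hs.
Qed.

Lemma sorted_sizes_rot j (f : seq tree) : sorted_sizes (rot j f) = sorted_sizes f.
Proof.
rewrite /sorted_sizes map_rot; apply/perm_sortP.
- by move=> a b; rewrite /geq leq_total.
- by move=> b a c H1 H2; exact: leq_trans H2 H1.
- by move=> a b /andP [H1 H2]; apply/eqP; rewrite eqn_leq; apply/andP; split; [exact: H2 | exact: H1].
- by rewrite perm_rot.
Qed.

Theorem mainTheorem13 (n k : nat) :
  (exists f, inF n k f) ->
  exists cF cP : nat,
    [/\ has_card (inF n k) cF,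
        has_card (inFp n k) cP,
        (forall g : pforest, inFp n k g ->
           exists c, has_card (fun x : fnode => inU n k x && (Rot x == g)) c
                     /\ c * cP = n * cF)
      & (forall v : seq nat, exists a b,
           [/\ has_card (fun f => inF n k f && (sorted_sizes f == v)) a,
               has_card (fun g : pforest => inFp n k g && (sorted_sizes (pf_trees g) == v)) b
             & a * cP = b * cF])].
Proof.
move=> [f0 Hf0].
have HSF : has_card (inF n k) (size (SF n k)).
  by exists (SF n k); split => //; [exact: SF_uniq | exact: SF_mem].
have HSa : forall v, has_card (fun f => inF n k f && (sorted_sizes f == v))
     (size (SFQ n k (fun f => sorted_sizes f == v))).
  by move=> v; exists (SFQ n k (fun f => sorted_sizes f == v)); split => //;
     [exact: SFQ_uniq | move=> f; exact: SFQ_mem].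
case: (posnP k) => [k0 | kpos].
- subst k.
  have Fp0 : forall g, inFp n 0 g = false.
    by move=> g; rewrite /inFp /inF /pf_trees /=.
  exists (size (SF n 0)), 0; split.
  + exact: HSF.
  + by exists [::]; split => //; move=> g; rewrite Fp0.
  + by move=> g; rewrite Fp0.
  + move=> v; exists (size (SFQ n 0 (fun f => sorted_sizes f == v))), 0; split.
    * exact: HSa.
    * by exists [::]; split => //; move=> g; rewrite Fp0.
    * by rewrite muln0.
have QT : forall j (f : seq tree), (xpredT : pred (seq tree)) (rot j f) = (xpredT : pred (seq tree)) f by [].
have Qv : forall v j f, (fun f => sorted_sizes f == v) (rot j f) = (fun f => sorted_sizes f == v) f.
  by move=> v j f /=; rewrite sorted_sizes_rot.
have EF : SFQ n k xpredT = SF n k by rewrite /SFQ filter_predT.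
have K1 := @key_sum n k _ QT.
rewrite -SPQ_size EF in K1.
exists (size (SF n k)), (size (SPQ n k xpredT)); split => //.
- exists (SPQ n k xpredT); split => //; first exact: SPQ_uniq.
  by move=> g; rewrite SPQ_mem // andbT.
- move=> g Hg; exists k; split; last by rewrite K1.
  exists (fib k g); split; [exact: fib_uniq | move=> x; exact: fib_mem | ].
  by rewrite size_map size_iota.
- move=> v; have K2 := @key_sum n k _ (Qv v); rewrite -SPQ_size in K2.
  exists (size (SFQ n k (fun f => sorted_sizes f == v))), (size (SPQ n k (fun f => sorted_sizes f == v))).
  split => //.
  + exists (SPQ n k (fun f => sorted_sizes f == v)); split => //; first exact: SPQ_uniq.
    by move=> g; rewrite SPQ_mem.
  + apply/eqP; rewrite -(eqn_pmul2l kpos).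
    set a := size (SFQ _ _ _) in K2 *; set b := size (SPQ _ _ _) in K2 *.
    set cP := size (SPQ _ _ _) in K1 *; set cF := size (SF n k) in K1 *.
    apply/eqP; rewrite mulnCA K1 [RHS]mulnA K2.
    by rewrite mulnCA mulnA.
Qed.
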